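(* Let $r,t$ be integers with $1 \leq t\leq r-2$. Then there exist an $r$-regular graph $G$ that has a $t$-factor and a set $\mathcal{O}$ of pairwise edge-disjoint odd cycles of $G$ such that every $t$-factor of $G$ is edge-disjoint from at least one cycle of $\mathcal{O}$.
   Context: All graphs are finite and loopless but may have parallel edges. A cycle is a connected $2$-regular subgraph; it is odd if it has an odd number of edges. A $t$-factor of $G$ is a spanning $t$-regular subgraph. *)

(* Defs.v *)
From mathcomp Require Import all_boot.
Set Implicit Arguments. Unset Strict Implicit. Unset Printing Implicit Defensive.

(* A finite loopless multigraph: vertex type, edge type, and the two ends of
   each edge; parallel edges are allowed since edges are a separate type. *)
Record multigraph := Multigraph {
  vert : finType;
  edge : finType;
  end1 : edge -> vert;
  end2 : edge -> vert;
  loopless : forall e, end1 e != end2 e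
}.

Section Defs.
Variable G : multigraph.

Definition incident (e : edge G) (v : vert G) : bool :=
  (end1 e == v) || (end2 e == v).

(* degree of v in the subgraph with edge set F (no loops, so each incident
   edge counts once) *)
Definition deg (F : {set edge G}) (v : vert G) : nat :=
  #|[set e in F | incident e v]|.

Definition regular (r : nat) : Prop := forall v, deg [set: edge G] v = r.

Definition factor (t : nat) (F : {set edge G}) : Prop := forall v, deg F v = t.

Definition verts_of (C : {set edge G}) : {set vert G} :=
  [set v | [exists e in C, incident e v]].

Definition adj_in (C : {set edge G}) : rel (vert G) :=
  fun u v => [exists e in C, ((end1 e == u) && (end2 e == v))
                          || ((end1 e == v) && (end2 e == u))].

Definition is_cycle (C : {set edge G}) : Prop :=
  C != set0 /\
  (forall v, v \in verts_of C -> deg C v = 2) /\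
  (forall u v, u \in verts_of C -> v \in verts_of C -> connect (adj_in C) u v).

Definition is_odd_cycle (C : {set edge G}) : Prop := is_cycle C /\ odd #|C|.

End Defs.

(* Main.v *)
From mathcomp Require Import all_boot zify.
Require Import Defs.
Set Implicit Arguments. Unset Strict Implicit. Unset Printing Implicit Defensive.

Definition bg (V B : finType) (e1 e2 : B -> V) (m : B -> nat)
  (H : forall b, e1 b != e2 b) : multigraph :=
  @Multigraph V {b : B & 'I_(m b)} (fun e => e1 (tag e)) (fun e => e2 (tag e)) (fun e => H (tag e)).

Section Gen.
Variables (V B : finType) (e1 e2 : B -> V) (m : B -> nat) (H : forall b, e1 b != e2 b).
Local Notation G := (@bg V B e1 e2 m H).
Definition incb b u := (e1 b == u) || (e2 b == u).
Definition cnt (F : {set edge G}) b := #|[set e in F | tag e == b]|.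

Lemma deg_cnt (F : {set edge G}) (u : V) : deg F u = \sum_(b | incb b u) cnt F b.
Proof.
rewrite /deg /cnt -sum1_card.
rewrite (partition_big (fun e : edge G => tag e) (fun b => incb b u)); last first.
  by move=> e; rewrite inE => /andP[_].
apply: eq_bigr => b Hb; rewrite -sum1_card; apply: eq_bigl => e.
rewrite !inE; case: eqP => [Hb2|]; rewrite ?andbT ?andbF //=. subst b. by move: Hb; rewrite /incb /incident /= => ->; rewrite andbT.
Qed.

Definition Fg (g : B -> nat) : {set edge G} := [set e : edge G | (tagged e : nat) < g (tag e)].

Lemma cnt_Fg g b : g b <= m b -> cnt (Fg g) b = g b.
Proof.
move=> hb; rewrite /cnt -sum1_card.
have -> : \sum_(e in [set e in Fg g | tag e == b]) 1 =
   \sum_(c | c == b) \sum_(j : 'I_(m c) | j < g c) 1.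
  rewrite (sig_big_dep (fun c => c == b) (fun c (j : 'I_(m c)) => j < g c) (fun _ _ => 1)).
  by apply: eq_bigl => -[c j]; rewrite !inE /= andbC.
rewrite big_pred1_eq.
rewrite (big_ord_narrow (F := fun _ => 1) hb) sum1_card card_ord //.
Qed.

Lemma cnt_setT b : cnt [set: edge G] b = m b.
Proof.
have -> : [set: edge G] = Fg m by apply/setP => -[c j]; rewrite !inE /= ltn_ord.
by rewrite cnt_Fg.
Qed.
End Gen.
Section G2.
Variables (r k : nat).
Definition A := option ('I_k * bool).
Definition Vt := (A * 'I_4)%type.
Definition Bt := ((A * 'I_4) + ('I_k * 'I_3))%type.
Definition kP : 'I_4 := @Ordinal 4 0 isT.
Definition kX : 'I_4 := @Ordinal 4 1 isT.
Definition kY : 'I_4 := @Ordinal 4 2 isT.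
Definition kZ : 'I_4 := @Ordinal 4 3 isT.

Definition en1 (b : Bt) : Vt := match b with
| inl (a, c) => match val c with 0 => (a, kP) | 1 => (a, kX) | 2 => (a, kX) | _ => (a, kY) end
| inr (i, c) => match val c with 0 => (None, kP) | 1 => (None, kP) | _ => (Some (i, false), kP) end
end.
Definition en2 (b : Bt) : Vt := match b with
| inl (a, c) => match val c with 0 => (a, kX) | 1 => (a, kY) | 2 => (a, kZ) | _ => (a, kZ) end
| inr (i, c) => match val c with 0 => (Some (i, false), kP) | 1 => (Some (i,true), kP) | _ => (Some (i, true), kP) end
end.

Lemma loopless_en b : en1 b != en2 b.
Proof.
case: b => [[a [[|[|[|[|c]]]] Hc]]|[i [[|[|[|c]]] Hc]]] //=; rewrite ?xpair_eqE ?andbF //. by apply/negP => /andP[/eqP[]].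
Qed.
Lemma sum_prod (I J : finType) (h : I * J -> nat) : \sum_p h p = \sum_i \sum_j h (i,j).
Proof. by rewrite pair_bigA; apply: eq_bigr => -[]. Qed.

Lemma sum_if1 (I : finType) (x : I) (f : I -> nat) :
  \sum_i (if i == x then f i else 0) = f x.
Proof. by rewrite -big_mkcond big_pred1_eq. Qed.

Lemma o4P : (ord0 : 'I_4) = kP. Proof. exact: val_inj. Qed.
Lemma o4X : lift ord0 ord0 = kX :> 'I_4. Proof. exact: val_inj. Qed.
Lemma o4Y : lift ord0 (lift ord0 ord0) = kY :> 'I_4. Proof. exact: val_inj. Qed.
Lemma o4Z : lift ord0 (lift ord0 (lift ord0 ord0)) = kZ :> 'I_4. Proof. exact: val_inj. Qed.

Lemma locX a (g : Bt -> nat) :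
  \sum_(b | incb en1 en2 b (a, kX)) g b = g (inl (a, kP)) + g (inl (a, kX)) + g (inl (a, kY)).
Proof.
rewrite big_mkcond big_sumType /= sum_prod.
under eq_bigr => a' _ do rewrite !big_ord_recl big_ord0 o4Z o4Y o4X o4P.
rewrite /incb /= [X in _ + X]big1 ?addn0; last first.
  by move=> [i [[|[|[|c]]] Hc]] _ //=; rewrite !xpair_eqE /= ?andbF.
under eq_bigr => a' _ do rewrite !xpair_eqE /= ?andbF ?andbT ?orbF ?orbb ?orFb addn0.
by rewrite !big_split /= !sum_if1 big1_eq addn0 addnA.
Qed.

Definition t0 : 'I_3 := @Ordinal 3 0 isT.
Definition t1 : 'I_3 := @Ordinal 3 1 isT.
Definition t2 : 'I_3 := @Ordinal 3 2 isT.
Lemma o3P : (ord0 : 'I_3) = t0. Proof. exact: val_inj. Qed.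
Lemma o3X : lift ord0 ord0 = t1 :> 'I_3. Proof. exact: val_inj. Qed.
Lemma o3Y : lift ord0 (lift ord0 ord0) = t2 :> 'I_3. Proof. exact: val_inj. Qed.

Ltac inl_unroll := rewrite big_mkcond big_sumType /= sum_prod;
  under eq_bigr => a' _ do rewrite !big_ord_recl big_ord0 o4Z o4Y o4X o4P.

Lemma optE (T : eqType) (x y : T) : (Some x == Some y) = (x == y).
Proof. exact: (inj_eq (@Some_inj _)). Qed.
Lemma tfE : (true == false) = false. Proof. by []. Qed.
Lemma ftE : (false == true) = false. Proof. by []. Qed.

Lemma locY a (g : Bt -> nat) :
  \sum_(b | incb en1 en2 b (a, kY)) g b = g (inl (a, kX)) + g (inl (a, kZ)).
Proof.
inl_unroll. rewrite /incb /= [X in _ + X]big1 ?addn0; last first.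
  by move=> [i [[|[|[|c]]] Hc]] _ //=; rewrite !xpair_eqE /= ?andbF.
under eq_bigr => a' _ do rewrite !xpair_eqE /= ?andbF ?andbT ?orbF ?orbb ?orFb addn0.
by rewrite !big_split /= !sum_if1 !big1_eq ?addn0.
Qed.

Lemma locZ a (g : Bt -> nat) :
  \sum_(b | incb en1 en2 b (a, kZ)) g b = g (inl (a, kY)) + g (inl (a, kZ)).
Proof.
inl_unroll. rewrite /incb /= [X in _ + X]big1 ?addn0; last first.
  by move=> [i [[|[|[|c]]] Hc]] _ //=; rewrite !xpair_eqE /= ?andbF.
under eq_bigr => a' _ do rewrite !xpair_eqE /= ?andbF ?andbT ?orbF ?orbb ?orFb addn0.
by rewrite !big_split /= !sum_if1 !big1_eq ?addn0.
Qed.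

Lemma locPa i (g : Bt -> nat) :
  \sum_(b | incb en1 en2 b (Some (i, false), kP)) g b =
  g (inl (Some (i,false), kP)) + g (inr (i, t0)) + g (inr (i, t2)).
Proof.
inl_unroll. rewrite /incb /= sum_prod.
under eq_bigr => a' _ do rewrite !xpair_eqE /= ?andbF ?andbT ?orbF ?orbb ?orFb addn0.
under [X in _ + X]eq_bigr => i' _ do rewrite !big_ord_recl big_ord0 o3Y o3X o3P /= !xpair_eqE /= !optE !xpair_eqE !eqxx ?tfE ?ftE /= ?andbT ?andbF ?orbF addn0.
under eq_bigr => a' _ do rewrite addn0.
under [X in _ + X]eq_bigr => i' _ do rewrite add0n.
by rewrite sum_if1 big_split /= !sum_if1 addnA.
Qed.

Lemma locPb i (g : Bt -> nat) :
  \sum_(b | incb en1 en2 b (Some (i, true), kP)) g b =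
  g (inl (Some (i,true), kP)) + g (inr (i, t1)) + g (inr (i, t2)).
Proof.
inl_unroll. rewrite /incb /= sum_prod.
under eq_bigr => a' _ do rewrite !xpair_eqE /= ?andbF ?andbT ?orbF ?orbb ?orFb addn0.
under [X in _ + X]eq_bigr => i' _ do rewrite !big_ord_recl big_ord0 o3Y o3X o3P /= !xpair_eqE /= !optE !xpair_eqE !eqxx ?tfE ?ftE /= ?andbT ?andbF ?orbF ?orFb addn0.
under eq_bigr => a' _ do rewrite addn0.
under [X in _ + X]eq_bigr => i' _ do rewrite add0n.
by rewrite sum_if1 big_split /= !sum_if1 addnA.
Qed.

Lemma locV (g : Bt -> nat) :
  \sum_(b | incb en1 en2 b (None, kP)) g b =
  g (inl (None, kP)) + \sum_i (g (inr (i, t0)) + g (inr (i, t1))).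
Proof.
inl_unroll. rewrite /incb /= sum_prod.
under eq_bigr => a' _ do rewrite !xpair_eqE /= ?andbF ?andbT ?orbF ?orbb ?orFb addn0.
under [X in _ + X]eq_bigr => i' _ do rewrite !big_ord_recl big_ord0.
under [X in _ + X]eq_bigr => i' _ do rewrite o3X o3P /= ?eqxx /= ?addn0.
under eq_bigr => a' _ do rewrite addn0.
by rewrite sum_if1.
Qed.
End G2.


Definition mm k (a : A k) : nat := if a is Some _ then 1 else k.
Definition mlt r k (b : Bt k) : nat := match b with
  | inl (a, c) => match nat_of_ord c with 0 => r - 2 * mm a | 1 => mm a | 2 => mm a | _ => r - mm a end
  | inr _ => 1 end.
Definition GG r k : multigraph := @bg (Vt k) (Bt k) (@en1 k) (@en2 k) (@mlt r k) (@loopless_en k).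

Lemma cnt_le (V B : finType) (e1 e2 : B -> V) (m : B -> nat) (H : forall b, e1 b != e2 b)
  (F : {set edge (bg m H)}) b : cnt F b <= m b.
Proof.
rewrite -(cnt_setT m H b) /cnt; apply: subset_leq_card; apply/subsetP => e; rewrite !inE.
by case/andP=> _ ->.
Qed.

Section Main.
Variables (r k : nat).
Local Notation G := (GG r k).
Implicit Types (F : {set edge G}).

Lemma degX F a : deg F (a, kX) = cnt F (inl (a, kP)) + cnt F (inl (a, kX)) + cnt F (inl (a, kY)).
Proof. by rewrite deg_cnt locX. Qed.
Lemma degY F a : deg F (a, kY) = cnt F (inl (a, kX)) + cnt F (inl (a, kZ)).
Proof. by rewrite deg_cnt locY. Qed.
Lemma degZ F a : deg F (a, kZ) = cnt F (inl (a, kY)) + cnt F (inl (a, kZ)).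
Proof. by rewrite deg_cnt locZ. Qed.
Lemma degPa F i : deg F (Some (i, false), kP) =
  cnt F (inl (Some (i,false), kP)) + cnt F (inr (i, t0)) + cnt F (inr (i, t2)).
Proof. by rewrite deg_cnt locPa. Qed.
Lemma degPb F i : deg F (Some (i, true), kP) =
  cnt F (inl (Some (i,true), kP)) + cnt F (inr (i, t1)) + cnt F (inr (i, t2)).
Proof. by rewrite deg_cnt locPb. Qed.
Lemma degV F : deg F (None, kP) =
  cnt F (inl (None, kP)) + \sum_i (cnt F (inr (i, t0)) + cnt F (inr (i, t1))).
Proof. by rewrite deg_cnt locV. Qed.
End Main.

Lemma ord4_cases (c : 'I_4) : [\/ c = kP, c = kX, c = kY | c = kZ].
Proof.
case: c => [[|[|[|[|c]]]] Hc]; [constructor 1|constructor 2|constructor 3|constructor 4|by []];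
  exact: val_inj.
Qed.

Lemma sum_const2 k : \sum_(i < k) 2 = 2 * k.
Proof. by rewrite sum_nat_const card_ord mulnC. Qed.

Lemma regGG r k : 0 < k -> 2 * k <= r -> regular (GG r k) r.
Proof.
move=> hk0 hk [a c]; case: (ord4_cases c) => ->.
- case: a => [[i []]|].
  + rewrite degPb !cnt_setT /=; lia.
  + rewrite degPa !cnt_setT /=; lia.
  + rewrite degV !cnt_setT /=.
    under eq_bigr => i _ do rewrite !cnt_setT /=.
    rewrite sum_const2; lia.
- rewrite degX !cnt_setT /=; case: a => [?|] /=; lia.
- rewrite degY !cnt_setT /=; case: a => [?|] /=; lia.
- rewrite degZ !cnt_setT /=; case: a => [?|] /=; lia.
Qed.


Definition wA t k (a : A k) : nat := match a with None => t %/ 2 | Some (i, _) => nat_of_bool (i < t %/ 2) end.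
Definition fF t k (b : Bt k) : nat := match b with
 | inl (a, c) => match nat_of_ord c with 0 => t - 2 * wA t a | 1 => wA t a | 2 => wA t a | _ => t - wA t a end
 | inr (i, _) => nat_of_bool (i < t %/ 2) end.

Lemma sum_lt h : \sum_(i < h.+1) (nat_of_bool (i < h) + nat_of_bool (i < h)) = 2 * h.
Proof.
rewrite big_ord_recr /= ltnn addn0.
under eq_bigr => i _ do rewrite /= ltn_ord.
by rewrite sum_const2.
Qed.

Lemma wA_le t k (a : A k) : 2 * wA t a <= t.
Proof.
case: a => [[i ?]|] /=; last by lia.
case: ltnP => /= H; lia.
Qed.

Lemma fF_le r t : 1 <= t -> t <= r - 2 -> forall b, fF t b <= @mlt r (t %/ 2).+1 b.
Proof.
move=> h1 h2 [[a c]|[i c]] /=; last by case: (i < _).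
have := wA_le t a.
case: a => [[i ?]|] /=.
- case: ltnP => /= H; case: (ord4_cases c) => -> /=; lia.
- case: (ord4_cases c) => -> /=; lia.
Qed.

Definition FF r t : {set edge (GG r (t %/ 2).+1)} :=
  @Fg _ _ _ _ (@mlt r (t %/ 2).+1) (@loopless_en (t %/ 2).+1) (@fF t (t %/ 2).+1).

Lemma factorGG r t : 1 <= t -> t <= r - 2 -> factor t (FF r t).
Proof.
move=> h1 h2 [a c].
have hc b : cnt (FF r t) b = fF t b := cnt_Fg (@loopless_en _) (fF_le h1 h2 b).
case: (ord4_cases c) => ->.
- case: a => [[i []]|].
  + rewrite degPb !hc /=. have := wA_le t (Some (i, true) : A (t %/ 2).+1). simpl. lia.
  + rewrite degPa !hc /=. have := wA_le t (Some (i, true) : A (t %/ 2).+1). simpl. lia.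
  + rewrite degV !hc /=.
    under eq_bigr => i _ do rewrite !hc /=.
    rewrite sum_lt; lia.
- rewrite degX !hc /=; have := wA_le t a; lia.
- rewrite degY !hc /=; have := wA_le t a; lia.
- rewrite degZ !hc /=; have := wA_le t a; lia.
Qed.

Definition gi k (i : 'I_k) (b : Bt k) : nat :=
  match b with inr (i', _) => nat_of_bool (i' == i) | _ => 0 end.
Definition CC r k (i : 'I_k) : {set edge (GG r k)} :=
  @Fg _ _ _ _ (@mlt r k) (@loopless_en k) (gi i).

Lemma gi_le r k (i : 'I_k) b : gi i b <= @mlt r k b.
Proof. by case: b => [[a c]|[i' c]] //=; case: (i' == i). Qed.

Lemma cntC r k (i : 'I_k) b : cnt (CC r i) b = gi i b.
Proof. exact: (cnt_Fg (@loopless_en _) (gi_le r i b)). Qed.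

Definition te r k (i : 'I_k) (j : 'I_3) : edge (GG r k) :=
  @existT (Bt k) (fun b => 'I_(@mlt r k b)) (inr (i, j)) ord0.

Lemma te_in r k (i : 'I_k) j : te r i j \in CC r (k:=k) i.
Proof. by rewrite inE /= eqxx. Qed.

Lemma inCC r k (i : 'I_k) (e : edge (GG r k)) : e \in CC r i -> exists j, e = te r i j.
Proof.
rewrite inE; case: e => [[[a c]|[i' c]] x] //=.
case: eqP => // -> _; exists c; rewrite /te.
by case: x => [[|//] ?]; congr existT; apply: val_inj.
Qed.

Lemma ord3_cases (c : 'I_3) : [\/ c = t0, c = t1 | c = t2].
Proof.
case: c => [[|[|[|c]]] Hc]; [constructor 1|constructor 2|constructor 3|by []]; exact: val_inj.
Qed.

Lemma sum_ind k (i : 'I_k) : \sum_i' nat_of_bool (i' == i) = 1.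
Proof.
rewrite -(sum_if1 i (fun _ => 1)); apply: eq_bigr => i' _; by case: eqP.
Qed.

Lemma card_cnt (V B : finType) (e1 e2 : B -> V) (m : B -> nat) (H : forall b, e1 b != e2 b)
  (F : {set edge (bg m H)}) : #|F| = \sum_b cnt F b.
Proof.
rewrite /cnt -sum1_card.
rewrite (partition_big (fun e : edge (bg m H) => tag e) xpredT) //.
apply: eq_bigr => b _; rewrite -sum1_card; apply: eq_bigl => e.
by rewrite !inE.
Qed.

Lemma cardC r k (i : 'I_k) : #|CC r (k:=k) i| = 3.
Proof.
rewrite card_cnt.
under eq_bigr => b _ do rewrite cntC.
rewrite big_sumType /= big1_eq add0n sum_prod.
under eq_bigr => i' _ do rewrite !big_ord_recl big_ord0 /=.
have -> : 3 = \sum_i' (3 * nat_of_bool (i' == i)).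
  by rewrite -big_distrr /= sum_ind.
by apply: eq_bigr => i' _; case: (i' == i).
Qed.

Lemma adj_te r k (i : 'I_k) j :
  adj_in (CC r (k:=k) i) (en1 (inr (i, j))) (en2 (inr (i, j))) &&
  adj_in (CC r (k:=k) i) (en2 (inr (i, j))) (en1 (inr (i, j))).
Proof.
by apply/andP; split; apply/existsP; exists (te r i j); rewrite te_in /= !eqxx ?orbT.
Qed.

Lemma vertsC r k (i : 'I_k) u : u \in verts_of (CC r (k:=k) i) ->
  [\/ u = (None, kP), u = (Some (i, false), kP) | u = (Some (i, true), kP)].
Proof.
rewrite inE => /existsP [e /andP [He Hu]].
case: (inCC He) => j Ej; subst e.
move: Hu; rewrite /incident /=.
by case: (ord3_cases j) => -> /=; case/orP => /eqP <-; 
  [constructor 1|constructor 2|constructor 1|constructor 3|constructor 2|constructor 3].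
Qed.

Lemma cycC r k (i : 'I_k) : is_odd_cycle (CC r (k:=k) i).
Proof.
split; last by rewrite cardC.
split; first by apply/set0Pn; exists (te r i t0); exact: te_in.
split.
- move=> u /vertsC [] ->.
  + rewrite degV cntC /= add0n.
    under eq_bigr => i' _ do rewrite !cntC /=.
    by rewrite big_split /= sum_ind.
  + by rewrite (@degPa r k (CC r i) i) !cntC /= eqxx.
  + by rewrite (@degPb r k (CC r i) i) !cntC /= eqxx.
- have A0 := adj_te r i t0; have A1 := adj_te r i t1; have A2 := adj_te r i t2.
  move: A0 A1 A2 => /= /andP [A0 B0] /andP [A1 B1] /andP [A2 B2].
  move=> u v /vertsC [] -> /vertsC [] ->.
  - exact: connect0.
  - exact: connect1 A0.
  - exact: connect1 A1.
  - exact: connect1 B0.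
  - exact: connect0.
  - exact: connect1 A2.
  - exact: connect1 B1.
  - exact: connect1 B2.
  - exact: connect0.
Qed.

Lemma disjC r k (i j : 'I_k) : i != j -> [disjoint CC r i & CC r j].
Proof.
move=> hij; rewrite -setI_eq0; apply: contraT => /set0Pn [e]; rewrite inE => /andP [He1 He2].
case: (inCC He1) => c1 E1; case: (inCC He2) => c2 E2.
move: E2; rewrite E1 /te => /(congr1 tag) [] E; move: hij; rewrite E eqxx //.
Qed.

Lemma arm_par t n0 n1 n2 n3 c c' : n0 + n1 + n2 = t -> n1 + n3 = t -> n2 + n3 = t ->
  n0 + c + c' = t -> c <= 1 -> c' <= 1 -> c = c'.
Proof. lia. Qed.

Lemma miss r t : 1 <= t -> t <= r - 2 -> forall F : {set edge (GG r (t %/ 2).+1)},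
  factor t F -> exists i, [disjoint CC r i & F].
Proof.
move=> h1 h2 F hF; set k := (t %/ 2).+1 in F hF *.
case: (boolP [exists i, [disjoint CC r i & F]]) => [/existsP [i Hi]|]; first by exists i.
rewrite negb_exists => /forallP Hall; exfalso.
have key i : cnt F (inr (i, t0)) + cnt F (inr (i, t1)) = 2.
  have := Hall i; rewrite -setI_eq0 => /set0Pn [e]; rewrite inE => /andP [He HF].
  case: (inCC He) => j Ej; subst e.
  have hpos : 0 < cnt F (inr (i, j)).
    by apply/card_gt0P; exists (te r i j); rewrite inE HF /= eqxx.
  have hc b : cnt F (inr b) <= 1 := cnt_le F (inr b).
  have E0 : cnt F (inr (i, t0)) = cnt F (inr (i, t2)).
    have ex := hF (Some (i,false), kX); rewrite (@degX r k F) in ex.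
    have ey := hF (Some (i,false), kY); rewrite (@degY r k F) in ey.
    have ez := hF (Some (i,false), kZ); rewrite (@degZ r k F) in ez.
    have ep := hF (Some (i,false), kP); rewrite (@degPa r k F) in ep.
    exact: (arm_par ex ey ez ep).
  have E1 : cnt F (inr (i, t1)) = cnt F (inr (i, t2)).
    have ex := hF (Some (i,true), kX); rewrite (@degX r k F) in ex.
    have ey := hF (Some (i,true), kY); rewrite (@degY r k F) in ey.
    have ez := hF (Some (i,true), kZ); rewrite (@degZ r k F) in ez.
    have ep := hF (Some (i,true), kP); rewrite (@degPb r k F) in ep.
    exact: (arm_par ex ey ez ep).
  rewrite E0 E1; case: (ord3_cases j) hpos => -> hpos; rewrite ?E0 ?E1 in hpos;
    by move: hpos (hc (i,t2)); case: (cnt F (inr (i, t2))) => [|[|x]].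
have := hF (None, kP); rewrite (@degV r k F).
under eq_bigr => i _ do rewrite key.
rewrite sum_const2 /k; lia.
Qed.

Unset Implicit Arguments.

Theorem theorem2p1 (r t : nat) :
  1 <= t -> t <= r - 2 ->
  exists G : multigraph,
    regular G r /\
    (exists F : {set edge G}, factor t F) /\
    exists O : {set {set edge G}},
      (forall C, C \in O -> is_odd_cycle C) /\
      (forall C D, C \in O -> D \in O -> C != D -> [disjoint C & D]) /\
      (forall F : {set edge G}, factor t F -> exists2 C, C \in O & [disjoint C & F]).
Proof.
move=> h1 h2.
exists (GG r (t %/ 2).+1); split.
  by apply: regGG => //; lia.
split; first by exists (FF r t); exact: factorGG.
exists [set CC r i | i : 'I_(t %/ 2).+1]; split.
  by move=> C /imsetP [i _ ->]; exact: cycC.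
split.
  move=> C D /imsetP [i _ ->] /imsetP [j _ ->] hne; apply: disjC.
  by apply: contraNneq hne => ->.
move=> F hF; case: (miss h1 h2 hF) => i Hi; exists (CC r i) => //.
exact: imset_f.
Qed.
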